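(* Let $a\in\mathbb{Z}$ and $b\in\mathbb{Z}_{>0}$. Expand $q^{-\frac12a}X_4E_{(a,b)}-E_{(a,b-1)}$ as a $\mathbb{Z}[q^{\pm\frac12}]$-linear combination of standard monomials. Then every standard monomial $E_{(c,d)}$ occurring with nonzero coefficient satisfies $c=a-1$ and $d\ge b-1\ge0$.
   Context: Let $\mathcal{T}$ be the quantum torus over $\mathbb{Z}[q^{\pm\frac12}]$ generated by $X_1^{\pm1},X_2^{\pm1}$ with $X_1X_2=qX_2X_1$, with skew field of fractions $\mathcal{F}$. Define $X_k\in\mathcal{F}$ ($k\in\mathbb{Z}$) by $X_{k-1}X_{k+1}=q^{\frac12}X_k+1$ for $k$ odd and $X_{k-1}X_{k+1}=q^2X_k^4+1$ for $k$ even; $\mathcal{A}_q(1,4)$ is the $\mathbb{Z}[q^{\pm\frac12}]$-subalgebra of $\mathcal{F}$ generated by all $X_k$. For $x\in\mathbb{Z}$, $[x]_+=\max(x,0)$. Standard monomials: $E_{(a,b)}=q^{-\frac12ab}X_3^{[-a]_+}X_1^{[a]_+}X_2^{[b]_+}X_0^{[-b]_+}$ for $(a,b)\in\mathbb{Z}^2$; they form a $\mathbb{Z}[q^{\pm\frac12}]$-basis of $\mathcal{A}_q(1,4)$. *)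

(* Defs.v *)
From mathcomp Require Import all_boot all_order all_algebra.
Set Implicit Arguments. Unset Strict Implicit. Unset Printing Implicit Defensive.
Import Order.TTheory GRing.Theory Num.Theory.
Local Open Scope ring_scope.

(* Concrete model of the quantum torus T over Z[q^{±1/2}], q = t^2,        *)
(* t = q^{1/2}, generated by X1^{±1}, X2^{±1} with X1 X2 = q X2 X1.          *)
(* As a Z-module T is free on t^k X^(m,n) (k,m,n in Z) where                *)
(*   X^(m,n) := q^{-mn/2} X1^m X2^n   (symmetrised monomial),               *)
(* and the product is X^e X^f = q^{(e1 f2 - e2 f1)/2} X^(e+f)               *)
(*                            = t^{e1 f2 - e2 f1} X^(e+f).                  *)
(* An element is represented by a formal finite sum (a list) of terms      *)
(* z t^k X^(m,n), with z : int; two representations denote the same       *)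
(* element iff all their collected coefficients agree (qeq).               *)

Record term := Term { tz : int; tk : int; tm : int; tn : int }.
Definition qt := seq term.

Definition qcoef (s : qt) (k m n : int) : int :=
  \sum_(x <- s | (tk x == k) && (tm x == m) && (tn x == n)) tz x.

Definition qeq (s1 s2 : qt) : Prop :=
  forall k m n, qcoef s1 k m n = qcoef s2 k m n.

Definition qadd (s1 s2 : qt) : qt := s1 ++ s2.
Definition qopp (s : qt) : qt := [seq Term (- tz x) (tk x) (tm x) (tn x) | x <- s].
Definition qsub (s1 s2 : qt) : qt := qadd s1 (qopp s2).

Definition tmul (x y : term) : term :=
  Term (tz x * tz y) (tk x + tk y + (tm x * tn y - tn x * tm y))
       (tm x + tm y) (tn x + tn y).
Definition qmul (s1 s2 : qt) : qt := [seq tmul x y | x <- s1, y <- s2].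

Definition qmon (z k m n : int) : qt := [:: Term z k m n].
Definition qone : qt := qmon 1 0 0 0.
Definition qscal (z k : int) (s : qt) : qt := qmul (qmon z k 0 0) s.

Fixpoint qpow (s : qt) (n : nat) : qt :=
  match n with 0%N => qone | n'.+1 => qmul s (qpow s n') end.

Definition pospart (x : int) : nat := if x is Posz n then n else 0%N.

Definition X1 : qt := qmon 1 0 1 0.
Definition X2 : qt := qmon 1 0 0 1.
Definition X1inv : qt := qmon 1 0 (-1) 0.
Definition X2inv : qt := qmon 1 0 0 (-1).

(* The cluster variables X0, X3, X4 of A_q(1,4), determined by the
   exchange relations X_{k-1} X_{k+1} = q^{1/2} X_k + 1 (k odd) and
   X_{k-1} X_{k+1} = q^2 X_k^4 + 1 (k even).  They lie in T (Laurent
   phenomenon), and are obtained by solving the relations: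
     k = 1 :  X0 X2 = q^{1/2} X1 + 1    ==>  X0 = (q^{1/2} X1 + 1) X2^{-1}
     k = 2 :  X1 X3 = q^2 X2^4 + 1      ==>  X3 = X1^{-1} (q^2 X2^4 + 1)
     k = 3 :  X2 X4 = q^{1/2} X3 + 1    ==>  X4 = X2^{-1} (q^{1/2} X3 + 1) *)
Definition X0 : qt := qmul (qadd (qscal 1 1 X1) qone) X2inv.
Definition X3 : qt := qmul X1inv (qadd (qscal 1 4 (qpow X2 4)) qone).
Definition X4 : qt := qmul X2inv (qadd (qscal 1 1 X3) qone).

Definition E (a b : int) : qt :=
  qscal 1 (- (a * b))
    (qmul (qpow X3 (pospart (- a)))
      (qmul (qpow X1 (pospart a))
        (qmul (qpow X2 (pospart b)) (qpow X0 (pospart (- b)))))).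

(* A Z[q^{±1/2}]-linear combination of standard monomials, given as a
   formal finite sum of terms z t^k E_(c,d) (encoded as Term z k c d). *)
Definition Ecomb (s : seq term) : qt :=
  flatten [seq qscal (tz x) (tk x) (E (tm x) (tn x)) | x <- s].

(* The coefficient of E_(c,d) in such a combination is the Laurent
   polynomial  sum_k ecoef s k c d * t^k ;  it is nonzero iff some
   ecoef s k c d is nonzero. *)
Definition ecoef (s : seq term) (k c d : int) : int :=
  \sum_(x <- s | (tk x == k) && (tm x == c) && (tn x == d)) tz x.

Definition Ecoef_nonzero (s : seq term) (c d : int) : Prop :=
  exists k, ecoef s k c d != 0.

(* Main.v *)
Require Import Defs.
From mathcomp Require Import all_boot all_order all_algebra.
From mathcomp Require Import zify ring.
Set Implicit Arguments. Unset Strict Implicit. Unset Printing Implicit Defensive.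
Import Order.TTheory GRing.Theory Num.Theory.
Local Open Scope ring_scope.

Definition keyP (k m n : int) (x : term) : bool := (tk x == k) && (tm x == m) && (tn x == n).

Lemma qcoef_cat s1 s2 k m n : qcoef (s1 ++ s2) k m n = qcoef s1 k m n + qcoef s2 k m n.
Proof. by rewrite /qcoef big_cat. Qed.

Lemma qcoef_opp s k m n : qcoef (qopp s) k m n = - qcoef s k m n.
Proof. by rewrite /qcoef /qopp big_map sumrN. Qed.

Lemma qcoef_nil k m n : qcoef [::] k m n = 0.
Proof. by rewrite /qcoef big_nil. Qed.

Definition ksum (f : int -> int -> int -> int) (u : qt) : int :=
  \sum_(x <- u) tz x * f (tk x) (tm x) (tn x).

Lemma ksum0 f (u : qt) : (forall k m n, qcoef u k m n = 0) -> ksum f u = 0.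
Proof.
move: {2}(size u) (leqnn (size u)) => N; elim: N u => [|N IH] u.
  by case: u => // *; rewrite /ksum big_nil.
case: u => [|x u'] Hs H0; first by rewrite /ksum big_nil.
set u := x :: u'.
rewrite /ksum (bigID (keyP (tk x) (tm x) (tn x))) /=.
have -> : \sum_(i <- u | keyP (tk x) (tm x) (tn x) i) tz i * f (tk i) (tm i) (tn i)
   = qcoef u (tk x) (tm x) (tn x) * f (tk x) (tm x) (tn x).
  rewrite /qcoef big_distrl /=; apply: eq_bigr => y.
  by rewrite /keyP => /andP[/andP[/eqP-> /eqP->] /eqP->].
rewrite H0 mul0r add0r -big_filter.
apply: IH.
  rewrite size_filter /= /keyP !eqxx /=.
  by apply: leq_trans (count_size _ _) _.
move=> k m n; rewrite /qcoef big_filter_cond.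
case: (boolP (keyP (tk x) (tm x) (tn x) (Term 0 k m n))) => Hk.
  move: Hk; rewrite /keyP /= => /andP[/andP[/eqP<- /eqP<-] /eqP<-].
  by rewrite big1 // => y /andP[/negP].
rewrite -[RHS](H0 k m n) /qcoef; apply: eq_bigl => y.
rewrite /keyP /= in Hk *.
case: (boolP ((tk y == k) && (tm y == m) && (tn y == n))); rewrite ?andbF //.
move=> /andP[/andP[/eqP-> /eqP->] /eqP->]; rewrite andbT.
exact: Hk.
Qed.

Lemma ksum_eq f u v : qeq u v -> ksum f u = ksum f v.
Proof.
move=> H; apply/eqP; rewrite -subr_eq0; apply/eqP.
have := ksum0 f (u := u ++ qopp v).
have -> : ksum f (u ++ qopp v) = ksum f u - ksum f v.
  rewrite /ksum big_cat /= /qopp big_map /= -sumrN; congr (_ + _).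
  by apply: eq_bigr => y _; rewrite mulNr.
apply=> k m n.
by rewrite qcoef_cat qcoef_opp H subrr.
Qed.

Lemma cond_l (kx mx nx ky my ny K m n : int) :
 ((kx + ky + (mx * ny - nx * my) == K) && (mx + my == m) && (nx + ny == n)) = ((ky == K - kx - (mx * n - nx * m)) && (my == m - mx) && (ny == n - nx)).
Proof.
have [->|Hm] := eqVneq my (m - mx); have [->|Hn] := eqVneq ny (n - nx); rewrite ?andbF.
- apply/idP/idP; lia.
- lia.
- lia.
- lia.
Qed.

Lemma cond_r (kx mx nx ky my ny K m n : int) :
 ((kx + ky + (mx * ny - nx * my) == K) && (mx + my == m) && (nx + ny == n)) = ((kx == K - ky - (m * ny - n * my)) && (mx == m - my) && (nx == n - ny)).
Proof.
have [->|Hm] := eqVneq mx (m - my); have [->|Hn] := eqVneq nx (n - ny); rewrite ?andbF.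
- apply/idP/idP; lia.
- lia.
- lia.
- lia.
Qed.

Lemma qcoef_mul_l a b K m n : qcoef (qmul a b) K m n =
  \sum_(x <- a) tz x * qcoef b (K - tk x - (tm x * n - tn x * m)) (m - tm x) (n - tn x).
Proof.
rewrite /qcoef /qmul big_mkcond big_allpairs_dep /=; apply: eq_bigr => x _.
rewrite big_distrr /= [RHS]big_mkcond /=; apply: eq_bigr => y _.
by rewrite cond_l; case: ifP; rewrite ?mulr0.
Qed.

Lemma qcoef_mul_r a b K m n : qcoef (qmul a b) K m n =
  \sum_(y <- b) tz y * qcoef a (K - tk y - (m * tn y - n * tm y)) (m - tm y) (n - tn y).
Proof.
rewrite /qcoef /qmul big_mkcond big_allpairs_dep /= exchange_big /=; apply: eq_bigr => y _.
rewrite big_distrr /= [RHS]big_mkcond /=; apply: eq_bigr => x _.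
by rewrite cond_r; case: ifP => // _; rewrite mulrC.
Qed.

From Stdlib Require Import Setoid Morphisms.

#[export] Instance qeq_equiv : Equivalence qeq.
Proof.
split.
- by move=> x k m n.
- by move=> x y H k m n; rewrite H.
- by move=> x y z H1 H2 k m n; rewrite H1 H2.
Qed.

#[export] Instance qmul_proper : Proper (qeq ==> qeq ==> qeq) qmul.
Proof.
move=> a a' Ha b b' Hb K m n.
transitivity (qcoef (qmul a' b) K m n).
  rewrite !qcoef_mul_l.
  exact: (ksum_eq (fun k m0 n0 => qcoef b (K - k - (m0 * n - n0 * m)) (m - m0) (n - n0)) Ha).
rewrite !qcoef_mul_r.
exact: (ksum_eq (fun k m0 n0 => qcoef a' (K - k - (m * n0 - n * m0)) (m - m0) (n - n0)) Hb).
Qed.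

#[export] Instance qadd_proper : Proper (qeq ==> qeq ==> qeq) qadd.
Proof. by move=> a a' Ha b b' Hb K m n; rewrite !qcoef_cat Ha Hb. Qed.

#[export] Instance qopp_proper : Proper (qeq ==> qeq) qopp.
Proof. by move=> a a' Ha K m n; rewrite !qcoef_opp Ha. Qed.

#[export] Instance qsub_proper : Proper (qeq ==> qeq ==> qeq) qsub.
Proof. by move=> a a' Ha b b' Hb; apply: qadd_proper => //; apply: qopp_proper. Qed.

#[export] Instance qscal_proper z k : Proper (qeq ==> qeq) (qscal z k).
Proof. by move=> a a' Ha; apply: qmul_proper. Qed.

#[export] Instance qpow_proper : Proper (qeq ==> eq ==> qeq) qpow.
Proof. move=> a a' Ha n _ <-; elim: n => [|n IH] //=; exact: qmul_proper. Qed.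

Lemma tmulA x y z : tmul (tmul x y) z = tmul x (tmul y z).
Proof. by case: x y z => [? ? ? ?] [? ? ? ?] [? ? ? ?]; rewrite /tmul /=; congr Term; ring. Qed.

Lemma qmulA a b c : qmul (qmul a b) c = qmul a (qmul b c).
Proof.
elim: a => [|x a IH] //=.
rewrite /qmul /= allpairs_cat -[X in X ++ _ = _]/(qmul _ c) -[X in _ ++ X = _]/(qmul (qmul a b) c) IH.
congr (_ ++ _).
by rewrite /qmul allpairs_mapl map_allpairs; apply: eq_allpairs => y z; rewrite tmulA.
Qed.

Lemma qmul_catl a b c : qmul (a ++ b) c = qmul a c ++ qmul b c.
Proof. exact: allpairs_cat. Qed.

Lemma qmul_catr a b c : qeq (qmul a (b ++ c)) (qmul a b ++ qmul a c).
Proof.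
move=> K m n; rewrite qcoef_cat !qcoef_mul_l -big_split /=.
by apply: eq_bigr => x _; rewrite qcoef_cat mulrDr.
Qed.

Lemma qcoef_scal z k a K m n : qcoef (qscal z k a) K m n = z * qcoef a (K - k) m n.
Proof. by rewrite /qscal qcoef_mul_l big_seq1 /= !mul0r !subr0. Qed.

Lemma qcoef_qone K m n : qcoef qone K m n = ((K == 0) && (m == 0) && (n == 0))%:R.
Proof. by rewrite /qcoef /qone /qmon big_cons big_nil /= ![0 == _]eq_sym addr0; case: ifP. Qed.

Lemma qmul_scal_r a z k b : qeq (qmul a (qscal z k b)) (qscal z k (qmul a b)).
Proof.
move=> K m n; rewrite qcoef_scal !qcoef_mul_l big_distrr /=.
apply: eq_bigr => x _; rewrite qcoef_scal mulrCA; congr (_ * (_ * _)).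
by congr qcoef; ring.
Qed.

Lemma qmul_scal_l z k a b : qmul (qscal z k a) b = qscal z k (qmul a b).
Proof. exact: qmulA. Qed.

Lemma qscal_scal z1 k1 z2 k2 a : qeq (qscal z1 k1 (qscal z2 k2 a)) (qscal (z1 * z2) (k1 + k2) a).
Proof. by move=> K m n; rewrite !qcoef_scal mulrA; congr (_ * qcoef _ _ _ _); ring. Qed.

Lemma qscal_cat z k a b : qeq (qscal z k (a ++ b)) (qscal z k a ++ qscal z k b).
Proof. exact: qmul_catr. Qed.

Lemma qscal10 a : qeq (qscal 1 0 a) a.
Proof. by move=> K m n; rewrite qcoef_scal mul1r subr0. Qed.

Lemma qmul1l a : qeq (qmul qone a) a.
Proof. exact: qscal10. Qed.

Lemma qmul1r a : qeq (qmul a qone) a.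
Proof.
move=> K m n; rewrite qcoef_mul_l [RHS]/qcoef [RHS]big_mkcond; apply: eq_bigr => x _.
rewrite qcoef_qone.
case: (boolP ((tk x == K) && (tm x == m) && (tn x == n))) => [/andP[/andP[/eqP<- /eqP<-] /eqP<-]|H].
  by rewrite (_ : tk x - tk x - _ = 0) ?subrr ?eqxx ?mulr1 //; ring.
rewrite (_ : (_ && _ && _) = false) ?mulr0 //; apply/negbTE; move: H; lia.
Qed.

Lemma qpow_add a p r : qeq (qpow a (p + r)) (qmul (qpow a p) (qpow a r)).
Proof.
elim: p => [|p IH] /=; first by symmetry; apply: qmul1l.
rewrite qmulA; exact: qmul_proper.
Qed.

Lemma qpowSr a p : qeq (qpow a p.+1) (qmul (qpow a p) a).
Proof.
rewrite -addn1; setoid_rewrite qpow_add => /=.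
apply: qmul_proper => //; exact: qmul1r.
Qed.

Lemma comm_powl A B c n : qeq (qmul A B) (qscal 1 c (qmul B A)) ->
  qeq (qmul (qpow A n) B) (qscal 1 (c * n%:Z) (qmul B (qpow A n))).
Proof. move=> H; elim: n => [|n IH].
  rewrite mulr0; setoid_rewrite qscal10; change (qpow A 0) with qone; setoid_rewrite qmul1r; reflexivity.
rewrite qmulA; setoid_rewrite IH; setoid_rewrite qmul_scal_r.
rewrite -qmulA; setoid_rewrite H; rewrite qmul_scal_l.
setoid_rewrite qscal_scal; rewrite qmulA mul1r.
rewrite (_ : _ + c = c * n.+1%:Z); first reflexivity. lia.
Qed.

Definition qcoefc (s : qt) (k m n : int) : int :=
  foldr (fun x acc => (if (tk x == k) && (tm x == m) && (tn x == n) then tz x else 0) + acc) 0 s.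

Lemma qcoefcE s k m n : qcoef s k m n = qcoefc s k m n.
Proof.
elim: s => [|x s IH]; first by rewrite /qcoef big_nil.
by rewrite /qcoef big_cons -/(qcoef _ _ _ _) IH /=; case: ifP; rewrite ?add0r.
Qed.



Lemma qcoef_absent s k m n : ~~ has (keyP k m n) s -> qcoef s k m n = 0.
Proof.
elim: s => [|x s IH]; first by rewrite /qcoef big_nil.
rewrite /= negb_or => /andP[H1 H2]; rewrite /qcoef big_cons -/(qcoef _ _ _ _) IH //.
by move: H1; rewrite /keyP => /negbTE ->.
Qed.

Lemma all_has_key (f g : int -> int -> int -> int) s k m n :
  all (fun x => f (tk x) (tm x) (tn x) == g (tk x) (tm x) (tn x)) s ->
  has (keyP k m n) s -> f k m n = g k m n.
Proof.
elim: s => [|x s IH] //= /andP[/eqP H1 H2] /orP[|]; last exact: IH.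
by rewrite /keyP => /andP[/andP[/eqP<- /eqP<-] /eqP<-].
Qed.

Definition qcheck (l1 l2 : qt) : bool :=
  all (fun x => qcoefc l1 (tk x) (tm x) (tn x) == qcoefc l2 (tk x) (tm x) (tn x)) (l1 ++ l2).

Lemma qcheckP l1 l2 : qcheck l1 l2 -> qeq l1 l2.
Proof.
move=> H K m n; case: (boolP (has (keyP K m n) (l1 ++ l2))) => Hh.
  by rewrite !qcoefcE; exact: (all_has_key H Hh).
rewrite !qcoef_absent //; apply: contra Hh; rewrite has_cat => ->; by rewrite ?orbT.
Qed.

Definition L3 : qt := [:: Term 1 0 (-1) 0; Term 1 0 (-1) 4].
Definition L0 : qt := [:: Term 1 0 0 (-1); Term 1 0 1 (-1)].
Definition L4 : qt := [:: Term 1 0 (-1) 3; Term 1 0 (-1) (-1); Term 1 0 0 (-1)].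

Lemma X3E : qeq X3 L3. Proof. by apply: qcheckP; vm_compute. Qed.
Lemma X0E : qeq X0 L0. Proof. by apply: qcheckP; vm_compute. Qed.
Lemma X4E : qeq X4 L4. Proof. by apply: qcheckP; vm_compute. Qed.
Lemma C1 : qeq (qmul X4 X2) (qadd (qscal 1 (-1) X3) qone). Proof. by apply: qcheckP; vm_compute. Qed.
Lemma C2 : qeq (qmul X4 X3) (qscal 1 (-2) (qmul X3 X4)). Proof. by apply: qcheckP; vm_compute. Qed.
Lemma C3 : qeq (qmul X3 X1) (qadd (qscal 1 (-4) (qpow X2 4)) qone). Proof. by apply: qcheckP; vm_compute. Qed.
Lemma C4 : qeq (qmul X1 X2) (qscal 1 2 (qmul X2 X1)). Proof. by apply: qcheckP; vm_compute. Qed.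

Definition above (g1 g2 : int) (y : term) : bool :=
  (g1 <= tm y) && (g2 <= tn y) && (g1 + g2 < tm y + tn y).
Definition wabove (g1 g2 : int) (y : term) : bool := (g1 <= tm y) && (g2 <= tn y).

Definition pointed (e : qt) (g1 g2 : int) : Prop :=
  exists k r, qeq e (Term 1 k g1 g2 :: r) /\ all (above g1 g2) r.

Lemma pointed_qeq e e' g1 g2 : qeq e e' -> pointed e g1 g2 -> pointed e' g1 g2.
Proof. move=> H [k [r [H1 H2]]]; exists k, r; split => //; symmetry in H; exact: (Equivalence_Transitive _ _ _ H H1). Qed.

Lemma pointed_mon k m n : pointed (qmon 1 k m n) m n.
Proof. by exists k, [::]. Qed.

Lemma all_qmul r t g1 g2 h1 h2 : all (above g1 g2) r -> all (wabove h1 h2) t ->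
  all (above (g1 + h1) (g2 + h2)) (qmul r t).
Proof.
elim: r => [|x r IH] //= /andP[Hx Hr] Ht.
rewrite /qmul /= all_cat -/(qmul r t) IH // andbT all_map.
apply: sub_all Ht => y; move: Hx; rewrite /above /wabove /tmul /= => Hx Hy; lia.
Qed.

Lemma pointed_mul e f g1 g2 h1 h2 : pointed e g1 g2 -> pointed f h1 h2 ->
  pointed (qmul e f) (g1 + h1) (g2 + h2).
Proof.
move=> [k [r [He Hr]]] [l [r' [Hf Hr']]].
exists (k + l + (g1 * h2 - g2 * h1)), (map (tmul (Term 1 k g1 g2)) r' ++ qmul r (Term 1 l h1 h2 :: r')).
split.
  transitivity (qmul (Term 1 k g1 g2 :: r) (Term 1 l h1 h2 :: r')); first exact: qmul_proper.
  rewrite /qmul /= ?mulr1; reflexivity.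
rewrite all_cat all_map; apply/andP; split.
  apply: sub_all Hr' => y; rewrite /above /tmul /= => Hy; lia.
apply: all_qmul => //=; rewrite /wabove /= !lexx /=.
apply: sub_all Hr' => y; rewrite /above => Hy; lia.
Qed.

Lemma pointed_eq e a b a' b' : pointed e a b -> a = a' -> b = b' -> pointed e a' b'.
Proof. by move=> H <- <-. Qed.

Lemma pointed_pow e g1 g2 n : pointed e g1 g2 -> pointed (qpow e n) (g1 * n%:Z) (g2 * n%:Z).
Proof.
move=> H; elim: n => [|n IH] /=; first by rewrite !mulr0; apply: pointed_mon.
apply: pointed_eq; first exact: pointed_mul H IH.
all: lia.
Qed.

Lemma pointed_scal k e g1 g2 : pointed e g1 g2 -> pointed (qscal 1 k e) g1 g2.
Proof.
move=> H; apply: pointed_eq; first exact: pointed_mul (pointed_mon k 0 0) H.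
all: by rewrite add0r.
Qed.

Lemma pospartE c : (pospart c)%:Z - (pospart (- c))%:Z = c.
Proof. case: c => [[|n]|n] //=; first by rewrite subr0. by rewrite sub0r NegzE. Qed.

Lemma pointed_E c d : pointed (E c d) c d.
Proof.
rewrite /E; apply: pointed_scal.
have P3 : pointed X3 (-1) 0 by apply: pointed_qeq (qeq_equiv.(Equivalence_Symmetric) _ _ X3E) _; exists 0, [:: Term 1 0 (-1) 4].
have P0 : pointed X0 0 (-1) by apply: pointed_qeq (qeq_equiv.(Equivalence_Symmetric) _ _ X0E) _; exists 0, [:: Term 1 0 1 (-1)].
apply: pointed_eq.
  apply: pointed_mul (pointed_pow _ P3) (pointed_mul (pointed_pow _ (pointed_mon 0 1 0))
     (pointed_mul (pointed_pow _ (pointed_mon 0 0 1)) (pointed_pow _ P0))).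
- by rewrite -[RHS]pospartE; lia.
- by rewrite -[RHS]pospartE; lia.
Qed.

Lemma all_has_ex (T : Type) (p q : pred T) s : all p s -> has q s -> exists x, p x && q x.
Proof.
elim: s => [|x s IH] //= /andP[Hp Hs] /orP[Hq|Hq]; first by exists x; rewrite Hp Hq.
exact: IH.
Qed.

Lemma qcoef_nz_has s K m n : qcoef s K m n != 0 -> has (keyP K m n) s.
Proof. by apply: contraR => /qcoef_absent ->. Qed.

Lemma pointed_coef e g1 g2 : pointed e g1 g2 -> exists kE,
  (forall K, qcoef e K g1 g2 = (K == kE)%:R) /\
  (forall K m n, qcoef e K m n != 0 ->
     (m = g1 /\ n = g2) \/ (g1 <= m /\ g2 <= n /\ g1 + g2 < m + n)).
Proof.
move=> [k [r [He Hr]]]; exists k; split.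
  move=> K; rewrite He /qcoef big_cons -/(qcoef _ _ _ _) /= !eqxx !andbT.
  rewrite qcoef_absent; first by case: (eqVneq k K); rewrite ?addr0.
  rewrite -all_predC; apply: sub_all Hr => y; rewrite /above /keyP /= => H.
  apply/negP => /andP[/andP[_ /eqP Hm] /eqP Hn]; move: H; rewrite Hm Hn; lia.
move=> K m n; rewrite He => /qcoef_nz_has /= /orP[|Hh].
  by rewrite /keyP /= => /andP[/andP[_ /eqP<-] /eqP<-]; left.
have [y /andP[Hy Hk]] := all_has_ex Hr Hh; right.
move: Hy Hk; rewrite /above /keyP => Hy /andP[/andP[_ /eqP Hm] /eqP Hn].
move: Hy; rewrite Hm Hn => Hy; lia.
Qed.

Lemma qcoef_Ecomb u K m n :
  qcoef (Ecomb u) K m n = \sum_(x <- u) tz x * qcoef (E (tm x) (tn x)) (K - tk x) m n.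
Proof.
elim: u => [|x u IH]; first by rewrite big_nil qcoef_nil.
by rewrite /Ecomb /= qcoef_cat -/(Ecomb u) IH big_cons qcoef_scal.
Qed.

Lemma exists_min (u : seq term) : u <> [::] -> exists c d,
  has (fun y => (tm y == c) && (tn y == d)) u && all (fun y => c + d <= tm y + tn y) u.
Proof.
elim: u => [|x u IH] // _.
case: u IH => [|y u] IH.
  by exists (tm x), (tn x); rewrite /= !eqxx lexx.
have [c [d /andP[Hh Ha]]] := IH ltac:(by []).
case: (lerP (tm x + tn x) (c + d)) => Hle.
  exists (tm x), (tn x); rewrite /= !eqxx lexx /=.
  by apply: sub_all Ha => z H; apply: le_trans H.
exists c, d; move: Hh Ha => /= -> /andP[-> ->]; rewrite orbT /= andbT; exact: ltW.
Qed.

Lemma eq_big_all (T : Type) (P : pred T) (F G : T -> int) s : all P s ->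
  (forall x, P x -> F x = G x) -> \sum_(x <- s) F x = \sum_(x <- s) G x.
Proof.
move=> Ha H; elim: s Ha => [|x s IH] /=; first by rewrite !big_nil.
by move=> /andP[Hx Hs]; rewrite !big_cons H // IH.
Qed.

Lemma indep u : qeq (Ecomb u) [::] -> forall k c d, qcoef u k c d = 0.
Proof.
move: {2}(size u) (leqnn (size u)) => N; elim: N u => [|N IH] u.
  by case: u => //= _ _ k c d; rewrite qcoef_nil.
move=> Hs H0.
case: u Hs H0 IH => [|x0 u0] Hs H0 IH; first by move=> k c d; rewrite qcoef_nil.
set u := x0 :: u0.
have Hne : u <> [::] by [].
have [c [d /andP[Hh Ha]]] := exists_min Hne.
have [kE [HkE _]] := pointed_coef (pointed_E c d).
have Hz : forall k, qcoef u k c d = 0.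
  move=> k; have := H0 (k + kE) c d; rewrite qcoef_nil qcoef_Ecomb => <-.
  rewrite [LHS]/qcoef big_mkcond; apply: (eq_big_all Ha) => x Hx /=.
  case: (boolP ((tm x == c) && (tn x == d))) => [/andP[/eqP Hm /eqP Hn]|Hne'].
    rewrite Hm Hn !eqxx !andbT HkE.
    have -> : (k + kE - tk x == kE) = (tk x == k) by apply/idP/idP; lia.
    by case: (tk x == k); rewrite ?mulr1 ?mulr0.
  have [? [_ HsE]] := pointed_coef (pointed_E (tm x) (tn x)).
  rewrite ifF; last first.
    by apply/negbTE; apply: contra Hne' => /andP[/andP[_ ->] ->].
  case: (eqVneq (qcoef (E (tm x) (tn x)) (k + kE - tk x) c d) 0) => [->|Hnz]; first by rewrite mulr0.
  exfalso; case: (HsE _ _ _ Hnz) => [[Hm Hn]|[H1 [H2 H3]]].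
    by move: Hne'; rewrite Hm Hn !eqxx.
  move: Hx H3; lia.
set u' := filter (fun y => ~~ ((tm y == c) && (tn y == d))) u.
have Hu' : qeq u' u.
  move=> K m n; rewrite /u' /qcoef big_filter_cond.
  case: (boolP ((m == c) && (n == d))) => [/andP[/eqP Hm /eqP Hn]|Hmn].
    rewrite Hm Hn; transitivity (0:int); last by symmetry; exact: (Hz K).
    rewrite big1 // => y /andP[/negP H1 /andP[/andP[_ H2] H3]].
    by exfalso; apply: H1; rewrite H2 H3.
  apply: eq_bigl => y; case: (boolP ((tk y == K) && (tm y == m) && (tn y == n))); rewrite ?andbF //.
  move=> /andP[/andP[_ /eqP->] /eqP->]; by rewrite andbT.
have Hsz : (size u' < size u)%N.
  rewrite /u' size_filter -(count_predC (fun y => (tm y == c) && (tn y == d)) u).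
  rewrite -[X in (X < _)%N]add0n ltn_add2r -has_count; exact: Hh.
have HE : qeq (Ecomb u') [::].
  move=> K m n; rewrite qcoef_Ecomb -(H0 K m n) qcoef_Ecomb.
  exact: (ksum_eq (fun k m0 n0 => qcoef (E m0 n0) (K - k) m n) Hu').
move=> k c' d'; rewrite -(Hu' k c' d'); apply: IH HE _ _ _.
by rewrite -ltnS; apply: leq_trans Hsz Hs.
Qed.

Lemma flip A B c : qeq (qmul A B) (qscal 1 c (qmul B A)) -> qeq (qmul B A) (qscal 1 (- c) (qmul A B)).
Proof.
move=> H; setoid_rewrite H; setoid_rewrite qscal_scal.
rewrite mul1r addNr; symmetry; exact: qscal10.
Qed.

Lemma pospartP (n : nat) : pospart n%:Z = n. Proof. by []. Qed.
Lemma pospartN (n : nat) : pospart (- n%:Z) = 0%N. Proof. by case: n. Qed.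

Lemma E_neg (p β : nat) : qeq (E (- p%:Z) β%:Z) (qscal 1 (p%:Z * β%:Z) (qmul (qpow X3 p) (qpow X2 β))).
Proof.
rewrite /E opprK !pospartP !pospartN /=.
rewrite mulNr opprK; apply: qscal_proper; apply: qmul_proper => //.
setoid_rewrite qmul1l; exact: qmul1r.
Qed.

Lemma E_pos (α β : nat) : qeq (E α%:Z β%:Z) (qscal 1 (- (α%:Z * β%:Z)) (qmul (qpow X1 α) (qpow X2 β))).
Proof.
rewrite /E !pospartP !pospartN /=.
apply: qscal_proper; setoid_rewrite qmul1l; apply: qmul_proper => //; exact: qmul1r.
Qed.

Lemma final_sub k1 k1' k2 k3 Z W : k1 = k1' -> k2 = k3 ->
  qeq (qscal 1 k1 Z) (qsub (qadd (qscal 1 k1' Z) (qscal 1 k2 W)) (qscal 1 k3 W)).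
Proof.
move=> -> -> K m n; move: (qscal 1 k1' Z) (qscal 1 k3 W) => A B; rewrite /qsub /qadd !qcoef_cat qcoef_opp; ring.
Qed.

Lemma qmul_addr a b c : qeq (qmul a (qadd b c)) (qadd (qmul a b) (qmul a c)).
Proof. exact: qmul_catr. Qed.
Lemma qmul_addl a b c : qmul (qadd a b) c = qadd (qmul a c) (qmul b c).
Proof. exact: qmul_catl. Qed.

Lemma qscal_add z k a b : qeq (qscal z k (qadd a b)) (qadd (qscal z k a) (qscal z k b)).
Proof. exact: qmul_catr. Qed.

Lemma Ecomb1 z k m n : Ecomb [:: Term z k m n] = qscal z k (E m n) ++ [::].
Proof. reflexivity. Qed.

Lemma qpowS a n : qpow a n.+1 = qmul a (qpow a n). Proof. by []. Qed.

Lemma final2 k1 k1' k2 k2' k3 k4 Z1 Z2 W : k1 = k1' -> k2 = k2' -> k3 = k4 ->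
  qeq (qscal 1 k1 Z1 ++ (qscal 1 k2 Z2 ++ [::]))
      (qsub (qadd (qadd (qscal 1 k1' Z1) (qscal 1 k2' Z2)) (qscal 1 k3 W)) (qscal 1 k4 W)).
Proof.
move=> -> -> -> K m n; move: (qscal 1 k1' Z1) (qscal 1 k2' Z2) (qscal 1 k4 W) => A B C.
rewrite /qsub /qadd !qcoef_cat qcoef_opp qcoef_nil; ring.
Qed.

Opaque qscal qmul qpow qmon qone qadd qsub qopp.

Lemma alg_neg (A3 A4 A2 : qt) (p β : nat)
  (h1 : qeq (qmul A4 A2) (qadd (qscal 1 (-1) A3) qone))
  (h2 : qeq (qmul A3 A4) (qscal 1 2 (qmul A4 A3))) :
 qeq (qscal 1 (- β.+1%:Z) (qscal 1 (p.+1%:Z * β%:Z) (qmul (qpow A3 p.+1) (qpow A2 β))))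
     (qsub (qscal 1 (- - p%:Z) (qmul A4 (qscal 1 (p%:Z * β.+1%:Z) (qmul (qpow A3 p) (qpow A2 β.+1)))))
           (qscal 1 (p%:Z * β%:Z) (qmul (qpow A3 p) (qpow A2 β)))).
Proof.
setoid_rewrite qmul_scal_r.
setoid_rewrite qscal_scal.
rewrite [qpow A2 β.+1]qpowS.
rewrite -qmulA.
have H2 := flip (comm_powl p h2).
setoid_rewrite H2. rewrite qmul_scal_l. setoid_rewrite qscal_scal.
rewrite qmulA -[qmul A4 (qmul A2 _)]qmulA.
setoid_rewrite h1. rewrite qmul_addl qmul_scal_l.
setoid_rewrite qmul1l.
setoid_rewrite qmul_addr. setoid_rewrite qmul_scal_r. setoid_rewrite qscal_add.
setoid_rewrite qscal_scal.
rewrite -qmulA !mul1r.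
setoid_rewrite <- (qpowSr A3 p).
apply: final_sub; lia.
Qed.

Lemma alg_pos (A1 A2 A3 A4 : qt) (α β : nat)
  (h1 : qeq (qmul A4 A2) (qadd (qscal 1 (-1) A3) qone))
  (h3 : qeq (qmul A3 A1) (qadd (qscal 1 (-4) (qpow A2 4)) qone))
  (h4 : qeq (qmul A1 A2) (qscal 1 2 (qmul A2 A1))) :
 qeq (qscal 1 (- (4 * α.+1%:Z) - β.+1%:Z) (qscal 1 (- (α%:Z * (4 + β)%N%:Z)) (qmul (qpow A1 α) (qpow A2 (4 + β))))
      ++ (qscal 1 (- β.+1%:Z) (qscal 1 (- (α%:Z * β%:Z)) (qmul (qpow A1 α) (qpow A2 β))) ++ [::]))
     (qsub (qscal 1 (- α.+1%:Z) (qmul A4 (qscal 1 (- (α.+1%:Z * β.+1%:Z)) (qmul (qpow A1 α.+1) (qpow A2 β.+1)))))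
           (qscal 1 (- (α.+1%:Z * β%:Z)) (qmul (qpow A1 α.+1) (qpow A2 β)))).
Proof.
setoid_rewrite qmul_scal_r.
setoid_rewrite qscal_scal.
rewrite [qpow A2 β.+1]qpowS.
rewrite -[qmul (qpow A1 α.+1) (qmul A2 _)]qmulA.
setoid_rewrite (comm_powl α.+1 h4).
rewrite qmul_scal_l; setoid_rewrite qmul_scal_r; setoid_rewrite qscal_scal.
rewrite qmulA -[qmul A4 (qmul A2 _)]qmulA.
setoid_rewrite h1. rewrite qmul_addl qmul_scal_l.
setoid_rewrite qmul1l.
rewrite [qpow A1 α.+1]qpowS.
rewrite [qmul (qmul A1 _) _]qmulA -[qmul A3 (qmul A1 _)]qmulA.
setoid_rewrite h3. rewrite qmul_addl qmul_scal_l.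
setoid_rewrite qmul1l.
rewrite -[qmul (qpow A2 4) (qmul (qpow A1 α) _)]qmulA.
setoid_rewrite (comm_powl 4 (flip (comm_powl α h4))).
rewrite qmul_scal_l qmulA.
setoid_rewrite <- (qpow_add A2 4 β).
setoid_rewrite qscal_add. setoid_rewrite qscal_add.
setoid_rewrite qscal_scal. setoid_rewrite qscal_scal.
setoid_rewrite qscal_add. setoid_rewrite qscal_scal.
rewrite !mul1r.
apply: final2; lia.
Qed.

Transparent qscal qmul qpow qmon qone qadd qsub qopp.

Lemma qeq_refl x : qeq x x. Proof. by []. Qed.
Lemma qeq_sym x y : qeq x y -> qeq y x. Proof. by move=> H k m n; rewrite H. Qed.
Lemma qeq_trans x y z : qeq x y -> qeq y z -> qeq x z. Proof. by move=> H1 H2 k m n; rewrite H1 H2. Qed.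

Lemma C2' : qeq (qmul X3 X4) (qscal 1 2 (qmul X4 X3)). Proof. by apply: qcheckP; vm_compute. Qed.

Lemma Ecomb2 z k m n z' k' m' n' :
  Ecomb [:: Term z k m n; Term z' k' m' n'] = qscal z k (E m n) ++ (qscal z' k' (E m' n') ++ [::]).
Proof. reflexivity. Qed.

Lemma exist_neg (p β : nat) :
  qeq (Ecomb [:: Term 1 (- β.+1%:Z) (- p%:Z - 1) (β.+1%:Z - 1)])
      (qsub (qscal 1 (- - p%:Z) (qmul X4 (E (- p%:Z) β.+1%:Z))) (E (- p%:Z) (β.+1%:Z - 1))).
Proof.
rewrite (_ : - p%:Z - 1 = - p.+1%:Z); last by lia.
rewrite (_ : β.+1%:Z - 1 = β%:Z); last by lia.
rewrite Ecomb1 cats0.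
have L := qscal_proper 1 (- β.+1%:Z) (E_neg p.+1 β).
have R := qsub_proper (qscal_proper 1 (- - p%:Z) (qmul_proper (qeq_refl X4) (E_neg p β.+1))) (E_neg p β).
have A := alg_neg p β C1 C2'.
exact: (qeq_trans L (qeq_trans A (qeq_sym R))).
Qed.

Lemma exist_pos (α β : nat) :
  qeq (Ecomb [:: Term 1 (- (4 * α.+1%:Z) - β.+1%:Z) (α.+1%:Z - 1) (β.+1%:Z + 3);
                 Term 1 (- β.+1%:Z) (α.+1%:Z - 1) (β.+1%:Z - 1)])
      (qsub (qscal 1 (- α.+1%:Z) (qmul X4 (E α.+1%:Z β.+1%:Z))) (E α.+1%:Z (β.+1%:Z - 1))).
Proof.
rewrite (_ : α.+1%:Z - 1 = α%:Z); last by lia.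
rewrite (_ : β.+1%:Z - 1 = β%:Z); last by lia.
rewrite (_ : β.+1%:Z + 3 = (4 + β)%N%:Z); last by lia.
rewrite Ecomb2.
have L := qadd_proper (qscal_proper 1 (- (4 * α.+1%:Z) - β.+1%:Z) (E_pos α (4 + β)))
           (qadd_proper (qscal_proper 1 (- β.+1%:Z) (E_pos α β)) (qeq_refl [::])).
have R := qsub_proper (qscal_proper 1 (- α.+1%:Z) (qmul_proper (qeq_refl X4) (E_pos α.+1 β.+1))) (E_pos α.+1 β).
have A := alg_pos α β C1 C3 C4.
exact: (qeq_trans L (qeq_trans A (qeq_sym R))).
Qed.

Lemma uniq_coef s s0 : qeq (Ecomb s) (Ecomb s0) -> forall k c d, qcoef s k c d = qcoef s0 k c d.
Proof.
move=> H k c d.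
have H0 : qeq (Ecomb (s ++ qopp s0)) [::].
  move=> K m n.
  have E1 : qcoef (Ecomb (s ++ qopp s0)) K m n = qcoef (Ecomb s) K m n - qcoef (Ecomb s0) K m n.
    rewrite !qcoef_Ecomb big_cat /= /qopp big_map /=; congr (_ + _).
    by rewrite -sumrN; apply: eq_bigr => x _; rewrite mulNr.
  by rewrite E1 H subrr qcoef_nil.
have := indep H0 k c d; rewrite qcoef_cat qcoef_opp => /eqP; rewrite subr_eq0 => /eqP.
exact.
Qed.

Theorem lemma4p5 (a b : int) (hb : 0 < b) :
  let lhs := qsub (qscal 1 (- a) (qmul X4 (E a b))) (E a (b - 1)) in
  (exists s : seq term, qeq (Ecomb s) lhs) /\
  (forall s : seq term, qeq (Ecomb s) lhs ->
     forall c d : int, Ecoef_nonzero s c d ->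
       c = a - 1 /\ b - 1 <= d /\ 0 <= b - 1).
Proof.
move=> lhs.
have [s0 [Hs0 Hkey]] : exists s0, qeq (Ecomb s0) lhs /\
   (forall k c d, qcoef s0 k c d != 0 -> c = a - 1 /\ b - 1 <= d).
  rewrite /lhs; clear lhs.
  have [β Hb] : exists β : nat, b = β.+1%:Z.
    by case: b hb => [[|n]|n] // _; exists n.
  subst b.
  case: (lerP a 0) => Ha.
    have [p Hp] : exists p : nat, a = - p%:Z by exists `|a|%N; lia.
    subst a; exists [:: Term 1 (- β.+1%:Z) (- p%:Z - 1) (β.+1%:Z - 1)]; split; first exact: exist_neg.
    move=> k c d /qcoef_nz_has /=; rewrite /keyP /= orbF => /andP[/andP[_ /eqP<-] /eqP<-].
    by split.
  case: a Ha => [[|α]|n] // _.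
  exists [:: Term 1 (- (4 * α.+1%:Z) - β.+1%:Z) (α.+1%:Z - 1) (β.+1%:Z + 3);
             Term 1 (- β.+1%:Z) (α.+1%:Z - 1) (β.+1%:Z - 1)]; split; first exact: exist_pos.
  move=> k c d /qcoef_nz_has /=; rewrite /keyP /= orbF.
  move=> /orP[/andP[/andP[_ /eqP<-] /eqP<-]|/andP[/andP[_ /eqP<-] /eqP<-]]; split => //; lia.
split; first by exists s0.
move=> s Hs c d [k Hk].
have Hu := uniq_coef (qeq_trans Hs (qeq_sym Hs0)) k c d.
have Hnz : qcoef s0 k c d != 0 by rewrite -Hu.
have [-> Hd] := Hkey _ _ _ Hnz; split => //; split => //; lia.
Qed.
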